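(* Let $(u_\beta)_{\beta<\alpha}$ be a non-increasing (for $\le_{lex}$) sequence of prime words. If $\alpha\ge2$, then the product $\prod_{\beta<\alpha}u_\beta$ is not prime.
   Context: $A$ is a finite alphabet with a linear order $<_A$. Words are sequences of letters indexed by countable ordinals; $\prod$ is ordered concatenation and $x^\alpha$ the concatenation of $\alpha$ copies of $x$. A suffix of $x$ is $x[\gamma,|x|)$, proper if $0<\gamma<|x|$. Write $x<_{str}x'$ if there are letters $a<_Ab$ and words $y,z,z'$ with $x=yaz$, $x'=ybz'$; $x\le_{lex}x'$ iff $x$ is a prefix of $x'$ or $x<_{str}x'$. A word is primitive if $x=y^\alpha$ implies $\alpha=1$ and $y=x$; $w$ is prime if it is primitive and every proper suffix $z$ satisfies $w\le_{lex}z$. A sequence is non-increasing if $\beta<\beta'$ implies $u_\beta\ge_{lex}u_{\beta'}$. *)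

(* Defs.v *)
From mathcomp Require Import all_boot all_order.
From Stdlib Require Import Relations.Relation_Operators.
Set Implicit Arguments. Unset Strict Implicit. Unset Printing Implicit Defensive.
Import Order.TTheory.

(* An ordinal is represented by a (strictly) well-ordered type; a word of
   length alpha is a labelling of the positions of such a well-order.
   Words / ordinals are identified up to (label-preserving) order isomorphism. *)
Record wo := WO { car : Type; rel : car -> car -> Prop }.
Arguments rel : clear implicits.

Definition is_wo (a : wo) : Prop :=
  (forall x, ~ rel a x x) /\
  (forall x y z, rel a x y -> rel a y z -> rel a x z) /\
  (forall x y, rel a x y \/ x = y \/ rel a y x) /\
  well_founded (rel a) /\
  (exists f : car a -> nat, forall x y, f x = f y -> x = y).

Definition wo_iso (a b : wo) : Prop :=
  exists f : car a -> car b, bijective f /\ forall x y, rel a x y <-> rel b (f x) (f y).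

Definition one : wo := @WO unit (fun _ _ => False).
Definition two : wo := @WO bool (fun b c => ~~ b && c).

Definition wo_sum (a : wo) (B : car a -> wo) : wo :=
  @WO {b : car a & car (B b)}
      (lexprod (car a) (fun b => car (B b)) (rel a) (fun b => rel (B b))).
Arguments wo_sum : clear implicits.

Section Words.
Context {d : Order.disp_t} {A : finOrderType d}.

Record word := Word { wshape : wo; lab : car wshape -> A }.
Arguments lab : clear implicits.
Definition pos (w : word) := car (wshape w).
Definition wlt (w : word) := rel (wshape w).
Arguments wlt : clear implicits.
Definition valid (w : word) : Prop := is_wo (wshape w).

Definition word_iso (x y : word) : Prop :=
  exists f : pos x -> pos y, bijective f /\
    (forall p q, wlt x p q <-> wlt y (f p) (f q)) /\
    (forall p, lab y (f p) = lab x p).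

Definition wprod (a : wo) (u : car a -> word) : word :=
  @Word (wo_sum a (fun b => wshape (u b))) (fun p => lab (u (projT1 p)) (projT2 p)).

Arguments wprod : clear implicits.
Definition wpow (x : word) (a : wo) : word := wprod a (fun _ => x).
Definition wcat (x y : word) : word := wprod two (fun b => if b then y else x).
Definition letter (c : A) : word := @Word one (fun _ => c).

Definition suffix (x : word) (g : pos x) : word :=
  @Word (@WO {p : pos x | ~ wlt x p g} (fun p q => wlt x (sval p) (sval q)))
        (fun p => lab x (sval p)).
Definition proper_pos (x : word) (g : pos x) : Prop := exists p, wlt x p g.

Definition is_prefix (x x' : word) : Prop :=
  exists z, valid z /\ word_iso x' (wcat x z).

Definition str_lt (x x' : word) : Prop :=
  exists (a b : A) (y z z' : word), (a < b)%O /\ valid y /\ valid z /\ valid z' /\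
    word_iso x (wcat (wcat y (letter a)) z) /\
    word_iso x' (wcat (wcat y (letter b)) z').

Definition lex_le (x x' : word) : Prop := is_prefix x x' \/ str_lt x x'.

Definition primitive (x : word) : Prop :=
  forall (y : word) (a : wo), valid y -> is_wo a -> word_iso x (wpow y a) ->
    wo_iso a one /\ word_iso y x.

Definition prime_word (w : word) : Prop :=
  primitive w /\ forall g : pos w, proper_pos g -> lex_le w (suffix g).

Definition nonincreasing (a : wo) (u : car a -> word) : Prop :=
  forall b b', rel a b b' -> lex_le (u b') (u b).

End Words.
Arguments lab {d A} w _.
Arguments wlt {d A} w _ _.
Arguments wprod {d A} a u.

(* Main.v *)
Require Import Defs.
From mathcomp Require Import all_boot all_order.
From Stdlib Require Import Relations.Relation_Operators Wellfounded.Lexicographic_Product Wellfounded.Inverse_Image.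
From Stdlib Require Import Classical Eqdep ProofIrrelevance ClassicalEpsilon.
Set Implicit Arguments. Unset Strict Implicit. Unset Printing Implicit Defensive.
Set Warnings "-notation-overridden".
Import Order.TTheory.
Import Defs.


Inductive M {d} {A : finOrderType d} (X Y : @word d A) : pos X -> pos Y -> Prop :=
| MI p q : lab X p = lab Y q ->
    (forall p', wlt X p' p -> exists2 q', wlt Y q' q & @M d A X Y p' q') ->
    (forall q', wlt Y q' q -> exists2 p', wlt X p' p & @M d A X Y p' q') -> @M d A X Y p q.
Arguments M {d A} X Y p q.

Definition Al {d} {A : finOrderType d} (X Y : @word d A) (p : pos X) (q : pos Y) :=
  (forall p', wlt X p' p -> exists2 q', wlt Y q' q & M X Y p' q') /\
  (forall q', wlt Y q' q -> exists2 p', wlt X p' p & M X Y p' q').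
Arguments Al {d A} X Y p q.
Definition WOk {d} {A : finOrderType d} (X : @word d A) :=
  well_founded (wlt X) /\ (forall p q, wlt X p q \/ p = q \/ wlt X q p) /\
  (forall p q r, wlt X p q -> wlt X q r -> wlt X p r).

Lemma M_Al d (A : finOrderType d) (X Y : word) p q :
  @M d A X Y p q <-> lab X p = lab Y q /\ Al X Y p q.
Proof.
split.
- intros H; inversion H; subst; split; [|split]; assumption.
- intros [H1 [H2 H3]]; constructor; assumption.
Qed.

Lemma M_lab d (A : finOrderType d) (X Y : word) p q : @M d A X Y p q -> lab X p = lab Y q.
Proof. intros H; apply M_Al in H; tauto. Qed.
Lemma M_Al' d (A : finOrderType d) (X Y : word) p q : @M d A X Y p q -> Al X Y p q.
Proof. intros H; apply M_Al in H; tauto. Qed.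

Lemma wf_irrefl T (R : T -> T -> Prop) : well_founded R -> forall x, ~ R x x.
Proof.
intros Hwf x; induction x as [x IH] using (well_founded_ind Hwf).
intros Hx; exact (IH x Hx Hx).
Qed.

Lemma WOk_irr d (A : finOrderType d) (X : @word d A) : WOk X -> forall p, ~ wlt X p p.
Proof. intros [H _]; apply wf_irrefl; exact H. Qed.

Lemma M_sym d (A : finOrderType d) (X Y : @word d A) : WOk X ->
  forall p q, M X Y p q -> M Y X q p.
Proof.
intros [Hwf _] p; induction p as [p IH] using (well_founded_ind Hwf).
intros q H; apply M_Al in H as [H0 [H1 H2]].
constructor; [symmetry; assumption| |].
- intros q' Hq'; destruct (H2 q' Hq') as [p' Hp' Hm]; exists p'; auto.
- intros p' Hp'; destruct (H1 p' Hp') as [q' Hq' Hm]; exists q'; auto.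
Qed.

Lemma Al_sym d (A : finOrderType d) (X Y : @word d A) : WOk X -> WOk Y ->
  forall p q, Al X Y p q -> Al Y X q p.
Proof.
intros HX HY p q [H1 H2]; split.
- intros q' Hq'; destruct (H2 q' Hq') as [p' Hp' Hm]; exists p'; auto; apply M_sym; auto.
- intros p' Hp'; destruct (H1 p' Hp') as [q' Hq' Hm]; exists q'; auto; apply M_sym; auto.
Qed.

Lemma M_sym_iff d (A : finOrderType d) (X Y : @word d A) : WOk X -> WOk Y ->
  forall p q, M X Y p q <-> M Y X q p.
Proof. intros; split; apply M_sym; auto. Qed.

Lemma Al_fun d (A : finOrderType d) (X Y : @word d A) : WOk X -> WOk Y ->
  forall p q1 q2, Al X Y p q1 -> Al X Y p q2 -> q1 = q2.
Proof.
intros [Hwf HX] HY p; induction p as [p IH] using (well_founded_ind Hwf).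
assert (Gen : forall q1 q2, Al X Y p q1 -> Al X Y p q2 -> ~ wlt Y q1 q2).
{ intros q1 q2 [H11 H12] [H21 H22] Hlt.
  destruct (H22 q1 Hlt) as [p' Hp' Hm].
  destruct (H11 p' Hp') as [q' Hq' Hm'].
  assert (q1 = q') by (apply (IH p' Hp'); apply M_Al'; assumption).
  subst q'. exact (WOk_irr HY Hq'). }
intros q1 q2 H1 H2.
destruct HY as [_ [Htot _]].
destruct (Htot q1 q2) as [Hlt|[Heq|Hlt]]; auto.
- exfalso; exact (Gen _ _ H1 H2 Hlt).
- exfalso; exact (Gen _ _ H2 H1 Hlt).
Qed.

Lemma M_fun d (A : finOrderType d) (X Y : @word d A) : WOk X -> WOk Y ->
  forall p q1 q2, M X Y p q1 -> M X Y p q2 -> q1 = q2.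
Proof. intros HX HY p q1 q2 H1 H2; apply M_Al' in H1; apply M_Al' in H2; exact (Al_fun HX HY H1 H2). Qed.

Lemma Al_inj d (A : finOrderType d) (X Y : @word d A) : WOk X -> WOk Y ->
  forall p1 p2 q, Al X Y p1 q -> Al X Y p2 q -> p1 = p2.
Proof.
intros HX HY p1 p2 q H1 H2; exact (Al_fun HY HX (Al_sym HX HY H1) (Al_sym HX HY H2)).
Qed.

Lemma M_inj d (A : finOrderType d) (X Y : @word d A) : WOk X -> WOk Y ->
  forall p1 p2 q, M X Y p1 q -> M X Y p2 q -> p1 = p2.
Proof. intros HX HY p1 p2 q H1 H2; apply M_Al' in H1; apply M_Al' in H2; exact (Al_inj HX HY H1 H2). Qed.

Lemma Al_mono d (A : finOrderType d) (X Y : @word d A) : WOk X -> WOk Y ->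
  forall p q p' q', Al X Y p q -> wlt X p' p -> Al X Y p' q' -> M X Y p' q' /\ wlt Y q' q.
Proof.
intros HX HY p q p' q' [H1 _] Hlt H'.
destruct (H1 p' Hlt) as [q'' Hq Hm].
assert (q'' = q') by exact (Al_fun HX HY (M_Al' Hm) H').
subst; auto.
Qed.

Lemma M_refl d (A : finOrderType d) (X : @word d A) : WOk X -> forall p, M X X p p.
Proof.
intros [Hwf _] p; induction p as [p IH] using (well_founded_ind Hwf).
constructor; auto.
- intros p' Hp'; exists p'; auto.
- intros p' Hp'; exists p'; auto.
Qed.

Lemma Al_id d (A : finOrderType d) (X : @word d A) : WOk X -> forall p q, Al X X p q -> p = q.
Proof. intros HX p q H; exact (Al_fun HX HX (M_Al' (M_refl HX p)) H). Qed.

Lemma M_trans d (A : finOrderType d) (X Y Z : @word d A) : WOk X ->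
  forall p q r, M X Y p q -> M Y Z q r -> M X Z p r.
Proof.
intros [Hwf _] p; induction p as [p IH] using (well_founded_ind Hwf).
intros q r H1 H2; apply M_Al in H1 as [L1 [A1 B1]]; apply M_Al in H2 as [L2 [A2 B2]].
constructor; [congruence| |].
- intros p' Hp'; destruct (A1 p' Hp') as [q' Hq' Hm].
  destruct (A2 q' Hq') as [r' Hr' Hm']; exists r'; eauto.
- intros r' Hr'; destruct (B2 r' Hr') as [q' Hq' Hm].
  destruct (B1 q' Hq') as [p' Hp' Hm']; exists p'; eauto.
Qed.

Lemma Al_M_trans d (A : finOrderType d) (X Y Z : @word d A) : WOk X ->
  forall p q r, Al X Y p q -> M Y Z q r -> Al X Z p r.
Proof.
intros HX p q r [H1 H2] H; apply M_Al in H as [L [H3 H4]]; split.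
- intros p' Hp'; destruct (H1 p' Hp') as [q' Hq' Hm].
  destruct (H3 q' Hq') as [r' Hr' Hm']; exists r'; auto; eapply M_trans; eauto.
- intros r' Hr'; destruct (H4 r' Hr') as [q' Hq' Hm].
  destruct (H2 q' Hq') as [p' Hp' Hm']; exists p'; auto; eapply M_trans; eauto.
Qed.

Lemma M_Al_trans d (A : finOrderType d) (X Y Z : @word d A) : WOk X ->
  forall p q r, M X Y p q -> Al Y Z q r -> Al X Z p r.
Proof.
intros HX p q r H [H1 H2]; apply M_Al in H as [L [H3 H4]]; split.
- intros p' Hp'; destruct (H3 p' Hp') as [q' Hq' Hm].
  destruct (H1 q' Hq') as [r' Hr' Hm']; exists r'; auto; eapply M_trans; eauto.
- intros r' Hr'; destruct (H2 r' Hr') as [q' Hq' Hm].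
  destruct (H4 q' Hq') as [p' Hp' Hm']; exists p'; auto; eapply M_trans; eauto.
Qed.

Lemma M_mono d (A : finOrderType d) (X Y : @word d A) : WOk X -> WOk Y ->
  forall p q p' q', M X Y p q -> M X Y p' q' -> wlt X p' p -> wlt Y q' q.
Proof.
intros HX HY p q p' q' H H' Hlt.
destruct (Al_mono HX HY (M_Al' H) Hlt (M_Al' H')); auto.
Qed.

Lemma M_down d (A : finOrderType d) (X Y : @word d A) p q q' :
  M X Y p q -> wlt Y q' q -> exists2 p', wlt X p' p & M X Y p' q'.
Proof. intros H Hq; apply M_Al in H as [_ [_ H]]; auto. Qed.


Definition IEmb {d} {A : finOrderType d} (X' X : @word d A) (e : pos X' -> pos X) :=
  (forall p q, wlt X' p q <-> wlt X (e p) (e q)) /\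
  (forall p y, wlt X y (e p) -> exists p', e p' = y) /\
  (forall p, lab X (e p) = lab X' p).
Arguments IEmb {d A} X' X e.

Lemma TI_M d (A : finOrderType d) (X' X Y : @word d A) e : WOk X' -> IEmb X' X e ->
  forall p q, M X' Y p q <-> M X Y (e p) q.
Proof.
intros [Hwf _] [Hemb [Hdown Hlab]] p; induction p as [p IH] using (well_founded_ind Hwf).
intros q; split; intros H; apply M_Al in H as [L [H1 H2]]; constructor.
- rewrite Hlab; exact L.
- intros y Hy; destruct (Hdown p y Hy) as [p' <-].
  apply Hemb in Hy; destruct (H1 p' Hy) as [q' Hq' Hm]; exists q'; auto; apply IH; auto.
- intros q' Hq'; destruct (H2 q' Hq') as [p' Hp' Hm]; exists (e p'); [apply Hemb; auto|].
  apply IH; auto.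
- rewrite <- Hlab; exact L.
- intros p' Hp'; pose proof Hp' as Hp''; apply Hemb in Hp''.
  destruct (H1 (e p') Hp'') as [q' Hq' Hm]; exists q'; auto; apply IH; auto.
- intros q' Hq'; destruct (H2 q' Hq') as [y Hy Hm]; destruct (Hdown p y Hy) as [p' <-].
  exists p'; [apply Hemb; auto|]; apply IH; auto; apply Hemb; auto.
Qed.

Lemma TI_Al d (A : finOrderType d) (X' X Y : @word d A) e : WOk X' -> IEmb X' X e ->
  forall p q, Al X' Y p q <-> Al X Y (e p) q.
Proof.
intros HW He p q; pose proof He as [Hemb [Hdown Hlab]]; split; intros [H1 H2]; split.
- intros y Hy; destruct (Hdown p y Hy) as [p' <-].
  apply Hemb in Hy; destruct (H1 p' Hy) as [q' Hq' Hm]; exists q'; auto; apply (TI_M HW He); auto.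
- intros q' Hq'; destruct (H2 q' Hq') as [p' Hp' Hm]; exists (e p'); [apply Hemb; auto|].
  apply (TI_M HW He); auto.
- intros p' Hp'; pose proof Hp' as Hp''; apply Hemb in Hp''.
  destruct (H1 (e p') Hp'') as [q' Hq' Hm]; exists q'; auto; apply (TI_M HW He); auto.
- intros q' Hq'; destruct (H2 q' Hq') as [y Hy Hm]; destruct (Hdown p y Hy) as [p' <-].
  exists p'; [apply Hemb; auto|]; apply (TI_M HW He); auto.
Qed.

Lemma TI_M_r d (A : finOrderType d) (X' X Y : @word d A) e : WOk X' -> WOk X -> WOk Y -> IEmb X' X e ->
  forall p q, M Y X' q p <-> M Y X q (e p).
Proof.
intros HX' HX HY He p q.
rewrite (M_sym_iff HY HX'); rewrite (M_sym_iff HY HX); apply (TI_M HX' He).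
Qed.

Lemma TI_Al_r d (A : finOrderType d) (X' X Y : @word d A) e : WOk X' -> WOk X -> WOk Y -> IEmb X' X e ->
  forall p q, Al Y X' q p <-> Al Y X q (e p).
Proof.
intros HX' HX HY He p q; split; intros H.
- apply Al_sym; auto; apply (TI_Al HX' He); apply Al_sym; auto.
- apply Al_sym; auto; apply (TI_Al HX' He); apply Al_sym; auto.
Qed.

Definition CEmb {d} {A : finOrderType d} (X' X : @word d A) (e : pos X' -> pos X) (p0 : pos X') :=
  (forall p q, wlt X' p q <-> wlt X (e p) (e q)) /\
  (forall p y, ~ wlt X y (e p0) -> wlt X y (e p) -> exists p', e p' = y) /\
  (forall p, lab X (e p) = lab X' p) /\
  (forall p, ~ wlt X' p p0).
Arguments CEmb {d A} X' X e p0.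

Lemma CEmb_le d (A : finOrderType d) (X' X : @word d A) e p0 : WOk X' -> WOk X -> CEmb X' X e p0 ->
  forall p y, wlt X y (e p0) -> wlt X y (e p).
Proof.
intros [_ [Htot _]] [_ [_ Htr]] [Hemb [_ [_ Hl]]] p y Hy.
destruct (Htot p0 p) as [H|[H|H]].
- apply Hemb in H; eauto.
- subst; auto.
- exfalso; exact (Hl p H).
Qed.

Lemma TC_M d (A : finOrderType d) (X' X Y' Y : @word d A) e f p0 q0 :
  WOk X' -> WOk X -> WOk Y' -> WOk Y -> CEmb X' X e p0 -> CEmb Y' Y f q0 -> Al X Y (e p0) (f q0) ->
  forall p q, M X' Y' p q <-> M X Y (e p) (f q).
Proof.
intros HX' HX HY' HY He Hf H0.
pose proof He as [Heemb [Hec [Hel Hel0]]]; pose proof Hf as [Hfemb [Hfc [Hfl Hfl0]]].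
pose proof HX' as [Hwf _].
intros p; induction p as [p IH] using (well_founded_ind Hwf).
intros q; split; intros H; apply M_Al in H as [L [H1 H2]]; constructor.
- rewrite Hel Hfl; exact L.
- intros y Hy. destruct (classic (wlt X y (e p0))) as [Hy0|Hy0].
  + destruct (proj1 H0 y Hy0) as [q' Hq' Hm]; exists q'; auto.
    exact (CEmb_le HY' HY Hf q Hq').
  + destruct (Hec p y Hy0 Hy) as [p' <-]. apply Heemb in Hy.
    destruct (H1 p' Hy) as [q' Hq' Hm]; exists (f q'); [apply Hfemb; auto|]; apply IH; auto.
- intros y Hy. destruct (classic (wlt Y y (f q0))) as [Hy0|Hy0].
  + destruct (proj2 H0 y Hy0) as [p' Hp' Hm]; exists p'; auto.
    exact (CEmb_le HX' HX He p Hp').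
  + destruct (Hfc q y Hy0 Hy) as [q' <-]. apply Hfemb in Hy.
    destruct (H2 q' Hy) as [p' Hp' Hm]; exists (e p'); [apply Heemb; auto|]; apply IH; auto.
- rewrite <- Hel, <- Hfl; exact L.
- intros p' Hp'. pose proof Hp' as Hp''; apply Heemb in Hp''.
  destruct (H1 _ Hp'') as [y Hy Hm].
  destruct (classic (wlt Y y (f q0))) as [Hy0|Hy0].
  + exfalso. destruct (proj2 H0 y Hy0) as [z Hz Hm'].
    assert (z = e p') by exact (M_inj HX HY Hm' Hm). subst z.
    apply Heemb in Hz. exact (Hel0 _ Hz).
  + destruct (Hfc q y Hy0 Hy) as [q' <-]. exists q'; [apply Hfemb; auto|]. apply IH; auto.
- intros q' Hq'. pose proof Hq' as Hq''; apply Hfemb in Hq''.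
  destruct (H2 _ Hq'') as [y Hy Hm].
  destruct (classic (wlt X y (e p0))) as [Hy0|Hy0].
  + exfalso. destruct (proj1 H0 y Hy0) as [z Hz Hm'].
    assert (z = f q') by exact (M_fun HX HY Hm' Hm). subst z.
    apply Hfemb in Hz. exact (Hfl0 _ Hz).
  + destruct (Hec p y Hy0 Hy) as [p' <-]. exists p'; [apply Heemb; auto|]. apply IH; auto.
    apply Heemb; auto.
Qed.

Lemma TC_Al d (A : finOrderType d) (X' X Y' Y : @word d A) e f p0 q0 :
  WOk X' -> WOk X -> WOk Y' -> WOk Y -> CEmb X' X e p0 -> CEmb Y' Y f q0 -> Al X Y (e p0) (f q0) ->
  forall p q, Al X Y (e p) (f q) -> Al X' Y' p q.
Proof.
intros HX' HX HY' HY He Hf H0.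
pose proof He as [Heemb [Hec [Hel Hel0]]]; pose proof Hf as [Hfemb [Hfc [Hfl Hfl0]]].
intros p q [H1 H2]; split.
- intros p' Hp'. pose proof Hp' as Hp''; apply Heemb in Hp''.
  destruct (H1 _ Hp'') as [y Hy Hm].
  destruct (classic (wlt Y y (f q0))) as [Hy0|Hy0].
  + exfalso. destruct (proj2 H0 y Hy0) as [z Hz Hm'].
    assert (z = e p') by exact (M_inj HX HY Hm' Hm). subst z.
    apply Heemb in Hz. exact (Hel0 _ Hz).
  + destruct (Hfc q y Hy0 Hy) as [q' <-]. exists q'; [apply Hfemb; auto|].
    apply (TC_M HX' HX HY' HY He Hf H0); auto.
- intros q' Hq'. pose proof Hq' as Hq''; apply Hfemb in Hq''.
  destruct (H2 _ Hq'') as [y Hy Hm].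
  destruct (classic (wlt X y (e p0))) as [Hy0|Hy0].
  + exfalso. destruct (proj1 H0 y Hy0) as [z Hz Hm'].
    assert (z = f q') by exact (M_fun HX HY Hm' Hm). subst z.
    apply Hfemb in Hz. exact (Hfl0 _ Hz).
  + destruct (Hec p y Hy0 Hy) as [p' <-]. exists p'; [apply Heemb; auto|].
    apply (TC_M HX' HX HY' HY He Hf H0); auto.
Qed.

Lemma ltF d (A : finOrderType d) (x : A) : (x < x)%O -> False.
Proof. by rewrite Order.POrderTheory.ltxx. Qed.

Definition Pre {d} {A : finOrderType d} (X Y : @word d A) := forall p, exists q, M X Y p q.
Definition STR {d} {A : finOrderType d} (X Y : @word d A) :=
  exists p q, Al X Y p q /\ (lab X p < lab Y q)%O.
Definition LEp {d} {A : finOrderType d} (X Y : @word d A) := Pre X Y \/ STR X Y.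
Arguments Pre {d A} X Y. Arguments STR {d A} X Y. Arguments LEp {d A} X Y.

Lemma mismatch_unique d (A : finOrderType d) (X Y : @word d A) : WOk X -> WOk Y ->
  forall p1 q1 p2 q2, Al X Y p1 q1 -> lab X p1 <> lab Y q1 -> Al X Y p2 q2 -> lab X p2 <> lab Y q2 ->
  p1 = p2 /\ q1 = q2.
Proof.
intros HX HY p1 q1 p2 q2 H1 L1 H2 L2.
assert (p1 = p2).
{ pose proof HX as [_ [Htot _]]; destruct (Htot p1 p2) as [Hl|[He|Hl]]; auto; exfalso.
  - destruct (Al_mono HX HY H2 Hl H1) as [Hm _]; apply L1; exact (M_lab Hm).
  - destruct (Al_mono HX HY H1 Hl H2) as [Hm _]; apply L2; exact (M_lab Hm). }
subst; split; auto; exact (Al_fun HX HY H1 H2).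
Qed.

Lemma Pre_no_mismatch d (A : finOrderType d) (X Y : @word d A) : WOk X -> WOk Y ->
  Pre X Y -> forall p q, Al X Y p q -> lab X p <> lab Y q -> False.
Proof.
intros HX HY HP p q H L; destruct (HP p) as [q' Hm].
assert (q' = q) by exact (Al_fun HX HY (M_Al' Hm) H). subst; exact (L (M_lab Hm)).
Qed.

Lemma LE_STR_contra d (A : finOrderType d) (X Y : @word d A) : WOk X -> WOk Y ->
  LEp X Y -> STR Y X -> False.
Proof.
intros HX HY [HP|[p [q [H L]]]] [q' [p' [H' L']]]; apply Al_sym in H'; auto.
- apply (Pre_no_mismatch HX HY HP H'). intros E; rewrite E in L'; exact (ltF L').
- assert (lab X p <> lab Y q) by (intros E; rewrite E in L; exact (ltF L)).
  assert (lab X p' <> lab Y q') by (intros E; rewrite E in L'; exact (ltF L')).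
  destruct (mismatch_unique HX HY H H0 H' H1) as [-> ->].
  pose proof (Order.POrderTheory.lt_trans L L') as F; exact (ltF F).
Qed.


Definition WOo (a : wo) := well_founded (rel a) /\ (forall p q, rel a p q \/ p = q \/ rel a q p) /\
  (forall p q r, rel a p q -> rel a q r -> rel a p r).

Lemma valid_WOk d (A : finOrderType d) (X : @word d A) : valid X -> WOk X.
Proof. intros [_ [Htr [Htot [Hwf _]]]]; split; [|split]; auto. Qed.

Lemma is_wo_WOo a : is_wo a -> WOo a.
Proof. intros [_ [Htr [Htot [Hwf _]]]]; split; [|split]; auto. Qed.

Lemma sum_inv (a : wo) (B : car a -> wo) x y : rel (wo_sum a B) x y ->
  rel a (projT1 x) (projT1 y) \/ exists b p p', x = existT _ b p /\ y = existT _ b p' /\ rel (B b) p p'.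
Proof. intros H; destruct H as [b b' p p' H|b p p' H]; [left; auto | right; exists b, p, p'; auto]. Qed.

Lemma existT_inj2 (T : Type) (P : T -> Type) b p b' p' :
  existT P b p = existT P b' p' -> exists e : b = b', True.
Proof. intros H; exists (f_equal (@projT1 _ _) H); auto. Qed.

Lemma sum_same (a : wo) (B : car a -> wo) b p p' : ~ rel a b b ->
  rel (wo_sum a B) (existT _ b p) (existT _ b p') -> rel (B b) p p'.
Proof.
intros Hirr H; destruct (sum_inv H) as [H1|[b0 [q [q' [E1 [E2 H2]]]]]]; [simpl in H1; tauto|].
pose proof (f_equal (@projT1 _ _) E1) as F; simpl in F; subst b0.
apply inj_pairT2 in E1; apply inj_pairT2 in E2; subst; auto.
Qed.

Lemma sum_WOo (a : wo) (B : car a -> wo) : WOo a -> (forall b, WOo (B b)) -> WOo (wo_sum a B).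
Proof.
intros [Hwf [Htot Htr]] HB; split; [|split].
- apply wf_lexprod; auto. intros b; apply HB.
- intros [b p] [b' p']. destruct (Htot b b') as [H|[H|H]].
  + left; apply left_lex; auto.
  + subst b'. destruct (HB b) as [_ [Ht _]]. destruct (Ht p p') as [H|[H|H]].
    * left; apply right_lex; auto.
    * subst; right; left; auto.
    * right; right; apply right_lex; auto.
  + right; right; apply left_lex; auto.
- intros x y z H1 H2.
  destruct (sum_inv H1) as [K1|[b [p [p' [E1 [E2 K1]]]]]];
  destruct (sum_inv H2) as [K2|[b2 [q [q' [F1 [F2 K2]]]]]].
  + destruct x, z; apply left_lex; simpl in *; eauto.
  + subst y z; destruct x; simpl in *; apply left_lex; auto.
  + subst x y; destruct z; simpl in *; apply left_lex; auto.
  + subst x y z. pose proof (f_equal (@projT1 _ _) F1) as F; simpl in F; subst b2.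
    apply inj_pairT2 in F1; subst q. apply right_lex. destruct (HB b) as [_ [_ Htr']]; eauto.
Qed.

Lemma WOk_WOo d (A : finOrderType d) (X : @word d A) : WOk X <-> WOo (wshape X).
Proof. unfold WOk, WOo, wlt; tauto. Qed.

Lemma wprod_WOk d (A : finOrderType d) (a : wo) (u : car a -> @word d A) :
  WOo a -> (forall b, WOk (u b)) -> WOk (wprod a u).
Proof.
intros Ha Hu; apply WOk_WOo; simpl. apply sum_WOo; [exact Ha|]. intros b; apply WOk_WOo; apply Hu.
Qed.

Lemma two_WOo : WOo two.
Proof.
split; [|split].
- intros b; constructor; intros c; simpl; destruct b, c; simpl; try discriminate.
  intros _; constructor; intros e; destruct e; simpl; discriminate.
- intros [] []; simpl; auto.
- intros [] [] []; simpl; auto.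
Qed.

Lemma one_WOo : WOo one.
Proof.
split; [|split].
- intros b; constructor; intros c H; destruct H.
- intros [] []; auto.
- intros ? ? ? [].
Qed.

Lemma suffix_WOk d (A : finOrderType d) (X : @word d A) (g : pos X) : WOk X -> WOk (suffix g).
Proof.
intros [Hwf [Htot Htr]]; split; [|split].
- unfold wlt; simpl. apply (wf_inverse_image _ _ (wlt X) (@proj1_sig _ _)). exact Hwf.
- intros [p Hp] [q Hq]; unfold wlt; simpl. destruct (Htot p q) as [H|[H|H]]; auto.
  subst; right; left; f_equal; apply proof_irrelevance.
- intros [p Hp] [q Hq] [r Hr]; unfold wlt; simpl; eauto.
Qed.

Lemma IEmb_comp d (A : finOrderType d) (X1 X2 X3 : @word d A) e1 e2 :
  IEmb X1 X2 e1 -> IEmb X2 X3 e2 -> IEmb X1 X3 (fun p => e2 (e1 p)).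
Proof.
intros [H1 [D1 L1]] [H2 [D2 L2]]; split; [|split].
- intros p q; rewrite H1 H2; tauto.
- intros p y Hy. destruct (D2 _ _ Hy) as [z <-]. apply H2 in Hy.
  destruct (D1 _ _ Hy) as [p' <-]; eauto.
- intros p; rewrite L2 L1; auto.
Qed.

Lemma iso_IEmb d (A : finOrderType d) (X Y : @word d A) f :
  bijective f -> (forall p q, wlt X p q <-> wlt Y (f p) (f q)) -> (forall p, lab Y (f p) = lab X p) ->
  IEmb X Y f.
Proof.
intros [g Hfg Hgf] Ho Hl; split; [|split]; auto.
intros p y _; exists (g y); auto.
Qed.

Lemma iso_M d (A : finOrderType d) (X Y : @word d A) f : WOk X -> WOk Y -> IEmb X Y f ->
  forall p, M X Y p (f p).
Proof.
intros HX HY He p. apply (TI_M_r HX HY HX He). apply M_refl; auto.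
Qed.

Definition inl_pos d (A : finOrderType d) (X Z : @word d A) (p : pos X) : pos (wcat X Z) :=
  existT (fun b : bool => car (wshape (if b then Z else X))) false p.

Lemma inl_IEmb d (A : finOrderType d) (X Z : @word d A) : IEmb X (wcat X Z) (@inl_pos d A X Z).
Proof.
split; [|split].
- intros p q; split; intros H.
  + apply right_lex; exact H.
  + refine (@sum_same two (fun b : bool => wshape (if b then Z else X)) false p q _ H). simpl; discriminate.
- intros p y Hy. destruct (sum_inv Hy) as [H|[b [q [q' [E1 [E2 H]]]]]].
  + destruct y as [[] y]; simpl in H; discriminate.
  + unfold inl_pos in E2. pose proof (f_equal (@projT1 _ _) E2) as F; simpl in F; subst b.
    exists q; auto.
- intros p; reflexivity.
Qed.

Definition inr_pos d (A : finOrderType d) (X Z : @word d A) (p : pos Z) : pos (wcat X Z) :=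
  existT (fun b : bool => car (wshape (if b then Z else X))) true p.

Lemma wcat_WOk d (A : finOrderType d) (X Z : @word d A) : WOk X -> WOk Z -> WOk (wcat X Z).
Proof. intros HX HZ; apply wprod_WOk; [exact two_WOo|]. intros []; auto. Qed.

Lemma letter_WOk d (A : finOrderType d) (c : A) : WOk (letter c).
Proof. apply WOk_WOo; exact one_WOo. Qed.

Lemma below_mid d (A : finOrderType d) (y z : @word d A) (c : A) v :
  wlt (wcat (wcat y (letter c)) z) v (inl_pos z (inr_pos y (tt : pos (letter c)))) ->
  exists py, v = inl_pos z (inl_pos (letter c) py).
Proof.
intros H. destruct (proj1 (proj2 (inl_IEmb (wcat y (letter c)) z)) _ _ H) as [v' <-].
apply (proj1 (inl_IEmb (wcat y (letter c)) z)) in H.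
destruct (sum_inv H) as [K|[b [q [q' [E1 [E2 K]]]]]].
- destruct v' as [[] r]; simpl in K; try discriminate. exists r; reflexivity.
- unfold inr_pos in E2. pose proof (f_equal (@projT1 _ _) E2) as F; simpl in F; subst b.
  simpl in K. destruct K.
Qed.

Lemma Tr d (A : finOrderType d) (X Y : @word d A) : WOk X -> WOk Y -> lex_le X Y -> LEp X Y.
Proof.
intros HX HY [[z [Hz [f [Hb [Ho Hl]]]]]|[a [b [y [z [z' [Hab [Hy [Hz [Hz' [[f [Hb [Ho Hl]]] [f' [Hb' [Ho' Hl']]]]]]]]]]]]]].
- left. apply valid_WOk in Hz.
  pose proof (wcat_WOk HX Hz) as HV.
  pose proof (iso_IEmb Hb Ho Hl) as Hf. destruct Hb as [g Hfg Hgf].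
  intros p. exists (g (inl_pos z p)).
  apply (M_trans HX (q := inl_pos z p)).
  + apply (TI_M_r HX HV HX (inl_IEmb X z)). apply M_refl; auto.
  + apply (M_sym HY). rewrite <- (Hgf (inl_pos z p)) at 2. apply (iso_M HY HV Hf).
- right. apply valid_WOk in Hy, Hz, Hz'.
  set (V := wcat (wcat y (letter a)) z) in *.
  set (V' := wcat (wcat y (letter b)) z') in *.
  assert (HV : WOk V) by (apply wcat_WOk; auto; apply wcat_WOk; auto; apply letter_WOk).
  assert (HV' : WOk V') by (apply wcat_WOk; auto; apply wcat_WOk; auto; apply letter_WOk).
  pose proof (iso_IEmb Hb Ho Hl) as Hf. destruct Hb as [g Hfg Hgf].
  pose proof (iso_IEmb Hb' Ho' Hl') as Hf'. destruct Hb' as [g' Hfg' Hgf'].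
  set (pa := inl_pos z (inr_pos y (tt : pos (letter a)))).
  set (pb := inl_pos z' (inr_pos y (tt : pos (letter b)))).
  pose proof (IEmb_comp (inl_IEmb y (letter a)) (inl_IEmb (wcat y (letter a)) z)) as Ey.
  pose proof (IEmb_comp (inl_IEmb y (letter b)) (inl_IEmb (wcat y (letter b)) z')) as Ey'.
  assert (HM : forall py, M V V' (inl_pos z (inl_pos (letter a) py)) (inl_pos z' (inl_pos (letter b) py))).
  { intros py. apply (TI_M_r Hy HV' HV Ey'). apply (TI_M Hy Ey). apply M_refl; auto. }
  assert (Hal : Al V V' pa pb).
  { split.
    - intros v Hv. destruct (below_mid Hv) as [py ->]. eexists; [|apply HM].
      apply (proj1 (inl_IEmb (wcat y (letter b)) z')). apply left_lex. reflexivity.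
    - intros v Hv. destruct (below_mid Hv) as [py ->]. eexists; [|apply HM].
      apply (proj1 (inl_IEmb (wcat y (letter a)) z)). apply left_lex. reflexivity. }
  exists (g pa), (g' pb). split.
  + apply (M_Al_trans HX (q := pa)).
    * rewrite <- (Hgf pa) at 2. apply (iso_M HX HV Hf).
    * apply (Al_M_trans HV (q := pb)); auto.
      apply (M_sym HY). rewrite <- (Hgf' pb) at 2. apply (iso_M HY HV' Hf').
  + rewrite <- (Hl (g pa)), <- (Hl' (g' pb)), Hgf, Hgf'. exact Hab.
Qed.


Lemma wf_min T (R : T -> T -> Prop) (P : T -> Prop) : well_founded R -> (exists x, P x) ->
  exists x, P x /\ forall y, R y x -> ~ P y.
Proof.
intros Hwf [x Hx]. induction x as [x IH] using (well_founded_ind Hwf).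
destruct (classic (exists y, R y x /\ P y)) as [[y [Hy Py]]|N].
- exact (IH y Hy Py).
- exists x; split; auto. intros y Hy Py; apply N; eauto.
Qed.

Lemma wo_iso_one_contra (K : wo) (k1 k2 : car K) : k1 <> k2 -> wo_iso K one -> False.
Proof.
intros Hne [f [[g Hfg Hgf] _]]. apply Hne.
rewrite <- (Hfg k1), <- (Hfg k2). destruct (f k1), (f k2); reflexivity.
Qed.

Lemma two_is_wo : is_wo two.
Proof.
destruct two_WOo as [Hwf [Htot Htr]]. split; [|split; [|split; [|split]]]; auto.
- intros [] ; simpl; discriminate.
- exists (fun b : bool => if b then 1 else 0). intros [] []; simpl; auto; discriminate.
Qed.

Lemma prime_nonempty d (A : finOrderType d) (X : @word d A) : valid X -> prime_word X -> exists p : pos X, True.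
Proof.
intros HX [Hprim _]. apply NNPP; intros Hne.
assert (E : forall p : pos X, False) by (intros p; apply Hne; eauto).
destruct (Hprim X two HX two_is_wo) as [Hiso _].
- exists (fun p => False_rect _ (E p)). split; [|split].
  + exists (fun q : pos (wpow X two) => projT2 q).
    * intros p; destruct (E p).
    * intros [b p]; destruct (E p).
  + intros p; destruct (E p).
  + intros p; destruct (E p).
- exact (@wo_iso_one_contra two true false ltac:(discriminate) Hiso).
Qed.

Lemma M_mono_iff d (A : finOrderType d) (X Y : @word d A) : WOk X -> WOk Y ->
  forall p q p' q', M X Y p q -> M X Y p' q' -> (wlt X p' p <-> wlt Y q' q).
Proof.
intros HX HY p q p' q' H H'; split; intros Hl.
- exact (M_mono HX HY H H' Hl).
- pose proof HX as [_ [Htot _]]. destruct (Htot p' p) as [L|[E|L]]; auto.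
  + subst. assert (q = q') by exact (M_fun HX HY H H'). subst. exfalso; exact (WOk_irr HY Hl).
  + pose proof (M_mono HX HY H' H L) as L2. exfalso.
    pose proof HY as [_ [_ Htr]]. exact (WOk_irr HY (Htr _ _ _ Hl L2)).
Qed.

Lemma block_iso d (A : finOrderType d) (X m : @word d A) (K : wo)
  (R : pos X -> car K -> pos m -> Prop) :
  WOk X -> WOo K -> WOk m ->
  (forall q, exists k r, R q k r) -> (forall k r, exists q, R q k r) ->
  (forall q k r q' k' r', R q k r -> R q' k' r' ->
     (wlt X q q' <-> (rel K k k' \/ (k = k' /\ wlt m r r')))) ->
  (forall q k r, R q k r -> lab X q = lab m r) ->
  word_iso X (wpow m K).
Proof.
intros HX HK Hm Hex Hsur Hord Hlab.
pose proof HK as [HKwf [HKtot HKtr]]. pose proof Hm as [Hmwf [Hmtot Hmtr]].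
assert (HKirr : forall k, ~ rel K k k) by (apply wf_irrefl; auto).
assert (Huniq : forall q k r k' r', R q k r -> R q k' r' -> k = k' /\ r = r').
{ intros q k r k' r' H1 H2.
  destruct (HKtot k k') as [L|[E|L]].
  - exfalso; apply (WOk_irr HX (p := q)); apply (Hord _ _ _ _ _ _ H1 H2); auto.
  - subst; split; auto. destruct (Hmtot r r') as [L|[E|L]]; auto; exfalso.
    + apply (WOk_irr HX (p := q)); apply (Hord _ _ _ _ _ _ H1 H2); auto.
    + apply (WOk_irr HX (p := q)); apply (Hord _ _ _ _ _ _ H2 H1); auto.
  - exfalso; apply (WOk_irr HX (p := q)); apply (Hord _ _ _ _ _ _ H2 H1); auto. }
assert (Hinj : forall q q' k r, R q k r -> R q' k r -> q = q').
{ intros q q' k r H1 H2. pose proof HX as [_ [Htot _]].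
  destruct (Htot q q') as [L|[E|L]]; auto; exfalso.
  - apply (Hord _ _ _ _ _ _ H1 H2) in L. destruct L as [L|[_ L]]; [exact (HKirr _ L)|exact (WOk_irr Hm L)].
  - apply (Hord _ _ _ _ _ _ H2 H1) in L. destruct L as [L|[_ L]]; [exact (HKirr _ L)|exact (WOk_irr Hm L)]. }
assert (F : forall q, {kr : {k : car K & pos m} | R q (projT1 kr) (projT2 kr)}).
{ intros q. apply constructive_indefinite_description.
  destruct (Hex q) as [k [r H]]. exists (existT _ k r); auto. }
assert (G : forall kr : {k : car K & pos m}, {q | R q (projT1 kr) (projT2 kr)}).
{ intros [k r]. apply constructive_indefinite_description. apply Hsur. }
exists (fun q => proj1_sig (F q)). split; [|split].
- exists (fun kr => proj1_sig (G kr)).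
  + intros q. destruct (F q) as [[k r] H]; simpl. destruct (G (existT _ k r)) as [q' H']; simpl in *.
    exact (Hinj _ _ _ _ H' H).
  + intros [k r]. destruct (G (existT _ k r)) as [q H]; simpl in *.
    destruct (F q) as [[k' r'] H']; simpl in *.
    destruct (Huniq _ _ _ _ _ H H') as [-> ->]; reflexivity.
- intros q q'. destruct (F q) as [[k r] H]; destruct (F q') as [[k' r'] H']; simpl.
  rewrite (Hord _ _ _ _ _ _ H H'). split.
  + intros [L|[E L]].
    * apply left_lex; exact L.
    * simpl in E; subst k'. apply right_lex; exact L.
  + intros L. destruct (sum_inv L) as [L1|[b [p [p' [E1 [E2 L2]]]]]]; [left; exact L1|].
    right. pose proof (f_equal (@projT1 _ _) E1) as F1; pose proof (f_equal (@projT1 _ _) E2) as F2.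
    pose proof (f_equal (fun x : {k : car K & pos m} => (projT2 x : pos m)) E1) as G1.
    pose proof (f_equal (fun x : {k : car K & pos m} => (projT2 x : pos m)) E2) as G2.
    simpl in *. subst. split; auto.
- intros q. destruct (F q) as [[k r] H]; simpl. symmetry; exact (Hlab _ _ _ H).
Qed.

Definition subwo (a : wo) (P : car a -> Prop) : wo :=
  @WO {k : car a | P k} (fun k k' => rel a (proj1_sig k) (proj1_sig k')).

Arguments subwo : clear implicits.
Lemma subwo_is_wo (a : wo) (P : car a -> Prop) : is_wo a -> is_wo (subwo a P).
Proof.
intros [Hirr [Htr [Htot [Hwf [f Hf]]]]]; split; [|split; [|split; [|split]]].
- intros [k Hk]; simpl; auto.
- intros [k Hk] [k' Hk'] [k'' Hk'']; simpl; eauto.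
- intros [k Hk] [k' Hk']; simpl. destruct (Htot k k') as [L|[E|L]]; auto.
  subst; right; left; f_equal; apply proof_irrelevance.
- apply (wf_inverse_image _ _ (rel a) (@proj1_sig _ _)); exact Hwf.
- exists (fun k => f (proj1_sig k)). intros [k Hk] [k' Hk'] E; simpl in E.
  apply Hf in E; subst; f_equal; apply proof_irrelevance.
Qed.


Definition blk d (A : finOrderType d) (a : wo) (u : car a -> @word d A) (b : car a) (p : pos (u b)) :
  pos (wprod a u) := existT (fun b => car (wshape (u b))) b p.
Arguments blk {d A a} u b p.

Lemma blk_lt_same d (A : finOrderType d) (a : wo) (u : car a -> @word d A) b p p' :
  ~ rel a b b -> (wlt (wprod a u) (blk u b p) (blk u b p') <-> wlt (u b) p p').
Proof.
intros Hirr; split; intros H.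
- exact (sum_same (B := fun b => wshape (u b)) Hirr H).
- apply right_lex; exact H.
Qed.

Lemma blk_lt_diff d (A : finOrderType d) (a : wo) (u : car a -> @word d A) b b' p p' :
  rel a b b' -> wlt (wprod a u) (blk u b p) (blk u b' p').
Proof. intros H; apply left_lex; exact H. Qed.

Lemma W_lt_inv d (A : finOrderType d) (a : wo) (u : car a -> @word d A) b b' p p' :
  wlt (wprod a u) (blk u b p) (blk u b' p') -> rel a b b' \/ b = b'.
Proof.
intros H; destruct (sum_inv H) as [L|[b1 [q [q' [E1 [E2 _]]]]]]; [left; exact L|right].
apply (f_equal (@projT1 _ _)) in E1, E2; simpl in *; congruence.
Qed.

Lemma blk_IEmb0 d (A : finOrderType d) (a : wo) (u : car a -> @word d A) b0 :
  (forall b, ~ rel a b b0) -> IEmb (u b0) (wprod a u) (blk u b0).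
Proof.
intros Hl; split; [|split].
- intros p q; symmetry; apply blk_lt_same; auto.
- intros p0 [b q] Hy. change (existT _ b q) with (blk u b q) in Hy.
  destruct (W_lt_inv Hy) as [L|E]; [destruct (Hl _ L)|subst; exists q; reflexivity].
- intros p; reflexivity.
Qed.

Lemma sblk_ok d (A : finOrderType d) (a : wo) (u : car a -> @word d A) bs p0 k p :
  (forall p, ~ wlt (u bs) p p0) -> ~ rel a k bs -> ~ wlt (wprod a u) (blk u k p) (blk u bs p0).
Proof.
intros Hp0 Hk H. destruct (sum_inv H) as [L|[b1 [q [q' [E1 [E2 L]]]]]]; [exact (Hk L)|].
pose proof (f_equal (@projT1 _ _) E1) as F1; pose proof (f_equal (@projT1 _ _) E2) as F2.
simpl in F1, F2; subst. apply inj_pairT2 in E2; subst. exact (Hp0 _ L).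
Qed.

Definition sblk d (A : finOrderType d) (a : wo) (u : car a -> @word d A) bs p0
  (Hp0 : forall p, ~ wlt (u bs) p p0) k (Hk : ~ rel a k bs) (p : pos (u k)) : pos (suffix (blk u bs p0)) :=
  exist _ (blk u k p) (sblk_ok Hp0 Hk (p := p)).
Arguments sblk {d A a} u {bs p0} Hp0 {k} Hk p.

Lemma s_decomp d (A : finOrderType d) (a : wo) (u : car a -> @word d A) bs p0
  (Hp0 : forall p, ~ wlt (u bs) p p0) (y : pos (suffix (blk u bs p0))) :
  exists k (Hk : ~ rel a k bs) p, y = sblk u Hp0 Hk p.
Proof.
destruct y as [[k p] Hy].
assert (Hk : ~ rel a k bs) by (intros L; apply Hy; apply left_lex; exact L).
exists k, Hk, p. unfold sblk; f_equal; apply proof_irrelevance.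
Qed.

Lemma sblk_lt_same d (A : finOrderType d) (a : wo) (u : car a -> @word d A) bs p0
  (Hp0 : forall p, ~ wlt (u bs) p p0) k (Hk Hk' : ~ rel a k bs) p p' :
  ~ rel a k k -> (wlt (suffix (blk u bs p0)) (sblk u Hp0 Hk p) (sblk u Hp0 Hk' p') <-> wlt (u k) p p').
Proof. intros Hirr; exact (@blk_lt_same d A a u k p p' Hirr). Qed.

Lemma sblk_CEmb d (A : finOrderType d) (a : wo) (u : car a -> @word d A) bs p0
  (Hp0 : forall p, ~ wlt (u bs) p p0) k (Hk : ~ rel a k bs) pk :
  ~ rel a k k -> (forall p, ~ wlt (u k) p pk) ->
  CEmb (u k) (suffix (blk u bs p0)) (sblk u Hp0 Hk) pk.
Proof.
intros Hirr Hpk; split; [|split; [|split]]; auto.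
- intros p q; symmetry; apply sblk_lt_same; auto.
- intros p y Hy1 Hy2. destruct (s_decomp Hp0 y) as [k' [Hk' [q ->]]].
  unfold wlt in Hy1, Hy2; simpl in Hy1, Hy2.
  destruct (W_lt_inv Hy2) as [L|E].
  + exfalso; apply Hy1; apply left_lex; exact L.
  + subst k'. exists q. unfold sblk; f_equal; apply proof_irrelevance.
Qed.

Lemma sblk_IEmb d (A : finOrderType d) (a : wo) (u : car a -> @word d A) bs p0
  (Hp0 : forall p, ~ wlt (u bs) p p0) (Hk : ~ rel a bs bs) :
  IEmb (u bs) (suffix (blk u bs p0)) (sblk u Hp0 Hk).
Proof.
split; [|split].
- intros p q; symmetry; apply sblk_lt_same; auto.
- intros p y Hy. destruct (s_decomp Hp0 y) as [k' [Hk' [q ->]]].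
  unfold wlt in Hy; simpl in Hy.
  destruct (W_lt_inv Hy) as [L|E]; [exfalso; exact (Hk' L)|].
  subst k'. exists q. unfold sblk; f_equal; apply proof_irrelevance.
- intros p; reflexivity.
Qed.

Lemma LE_first d (A : finOrderType d) (X W Y : @word d A) e :
  WOk X -> WOk W -> WOk Y -> IEmb X W e ->
  (forall z : pos W, (exists p, z = e p) \/ (forall p, wlt W (e p) z)) ->
  LEp W Y -> LEp X Y.
Proof.
intros HX HW HY He Hsplit [HP|[z [y [Hal L]]]].
- left; intros p. destruct (HP (e p)) as [q Hq]. exists q. apply (TI_M HX He); auto.
- destruct (Hsplit z) as [[p ->]|Hall].
  + right. exists p, y. split; [apply (TI_Al HX He); auto|]. rewrite <- (proj2 (proj2 He) p). exact L.
  + left; intros p. destruct (proj1 Hal (e p) (Hall p)) as [q _ Hq]. exists q. apply (TI_M HX He); auto.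
Qed.

Lemma sblk_pi d (A : finOrderType d) (a : wo) (u : car a -> @word d A) bs p0
  (Hp0 : forall p, ~ wlt (u bs) p p0) k (Hk Hk' : ~ rel a k bs) p :
  sblk u Hp0 Hk p = sblk u Hp0 Hk' p.
Proof. unfold sblk; f_equal; apply proof_irrelevance. Qed.

Definition sfx0 d (A : finOrderType d) (X : @word d A) (g : pos X) (Hirr : ~ wlt X g g) : pos (suffix g) :=
  exist _ g Hirr.

Lemma suffix_CEmb d (A : finOrderType d) (X : @word d A) (g : pos X) (Hirr : ~ wlt X g g) :
  CEmb (suffix g) X (@proj1_sig _ _) (sfx0 Hirr).
Proof.
split; [|split; [|split]].
- intros p q; reflexivity.
- intros p y Hy _. exists (exist _ y Hy); reflexivity.
- intros p; reflexivity.
- intros [p Hp]; exact Hp.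
Qed.


Lemma C1 d (A : finOrderType d) (a : wo) (u : car a -> @word d A) b0 (b1 b2 : car a) :
  is_wo a -> (forall b, valid (u b)) -> b1 <> b2 ->
  (forall b, Pre (u b) (u b0)) -> (forall b q, exists p, M (u b) (u b0) p q) ->
  primitive (wprod a u) -> False.
Proof.
intros Ha Hu Hb12 HPre Hfull Hprim.
pose proof (is_wo_WOo Ha) as HaO. pose proof HaO as [Hawf [Hatot Hatr]].
assert (Hairr : forall b, ~ rel a b b) by (apply wf_irrefl; auto).
assert (HuW : forall b, WOk (u b)) by (intros; apply valid_WOk; auto).
assert (HW : WOk (wprod a u)) by (apply wprod_WOk; auto).
assert (Hiso : word_iso (wprod a u) (wpow (u b0) a)).
{ apply (@block_iso d A (wprod a u) (u b0) a
    (fun q k r => projT1 q = k /\ M (u (projT1 q)) (u b0) (projT2 q) r)); auto.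
  - intros [b p]. destruct (HPre b p) as [r Hr]. exists b, r; simpl; auto.
  - intros k r. destruct (Hfull k r) as [p Hp]. exists (blk u k p); simpl; auto.
  - intros [b p] k r [b' p'] k' r' [E1 H1] [E2 H2]; simpl in *; subst k k'.
    change (existT _ b p) with (blk u b p). change (existT _ b' p') with (blk u b' p').
    split.
    + intros L. destruct (W_lt_inv L) as [L'|E]; [left; exact L'|right].
      subst b'. split; auto. apply (@blk_lt_same d A a u b p p' (Hairr b)) in L.
      exact (M_mono (HuW b) (HuW b0) H2 H1 L).
    + intros [L|[E L]]; [apply blk_lt_diff; exact L|].
      subst b'. apply (@blk_lt_same d A a u b p p' (Hairr b)).
      exact (proj2 (M_mono_iff (HuW b) (HuW b0) H2 H1) L).
  - intros [b p] k r [_ H]; simpl in *. exact (M_lab H). }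
destruct (Hprim (u b0) a (Hu b0) Ha Hiso) as [Hone _].
exact (wo_iso_one_contra Hb12 Hone).
Qed.


Lemma C3 d (A : finOrderType d) (a : wo) (u : car a -> @word d A) b0 :
  is_wo a -> (forall b, valid (u b)) -> (forall b, prime_word (u b)) -> nonincreasing u ->
  (forall b, ~ rel a b b0) -> (forall b, exists p : pos (u b), True) ->
  (forall b, Pre (u b) (u b0)) -> ~ (forall b q, exists p, M (u b) (u b0) p q) ->
  (forall g : pos (wprod a u), proper_pos g -> LEp (wprod a u) (suffix g)) -> False.
Proof.
intros Ha Hu Hp Hni Hb0 Hne HPre Hnf HWp.
pose proof (is_wo_WOo Ha) as HaO. pose proof HaO as [Hawf [Hatot Hatr]].
assert (Hairr : forall b, ~ rel a b b) by (apply wf_irrefl; auto).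
assert (HuW : forall b, WOk (u b)) by (intros; apply valid_WOk; auto).
assert (HW : WOk (wprod a u)) by (apply wprod_WOk; auto).
set (x := u b0) in *.
assert (Hx : WOk x) by apply HuW.
assert (Hxirr : forall q, ~ wlt x q q) by (apply WOk_irr; auto).
pose proof Hx as [Hxwf [Hxtot Hxtr]].
assert (Hlt0 : forall b, b <> b0 -> rel a b0 b).
{ intros b Hb; destruct (Hatot b b0) as [L|[E|L]]; [destruct (Hb0 _ L)|contradiction|exact L]. }
set (img := fun b q => exists p, M (u b) x p q).
assert (Hex : exists q, exists b, ~ img b q).
{ apply NNPP; intros N; apply Hnf; intros b q. apply NNPP; intros N2; apply N; exists q, b; exact N2. }
destruct (wf_min Hxwf Hex) as [cs [[bs Hcs] Hmin]].
assert (F1 : forall q, wlt x q cs -> forall b, img b q).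
{ intros q Hq b. apply NNPP; intros N. exact (Hmin q Hq (ex_intro _ b N)). }
assert (F2 : forall q, img bs q -> wlt x q cs).
{ intros q [p Hpq]. destruct (Hxtot q cs) as [L|[E|L]]; auto; exfalso; apply Hcs.
  - subst; exists p; auto.
  - destruct (M_down Hpq L) as [p' _ Hm]; exists p'; auto. }
assert (F3 : bs <> b0).
{ intros E; subst bs; apply Hcs; exists cs; apply M_refl; auto. }
assert (Hbs : rel a b0 bs) by (apply Hlt0; auto).
assert (F4 : forall b, rel a bs b -> forall q, img b q -> wlt x q cs).
{ intros b Hb q [p Hpq].
  assert (HL : LEp (u b) (u bs)) by (apply Tr; auto; apply Hni; auto).
  destruct HL as [HP|[p1 [p1' [Hal L]]]].
  - destruct (HP p) as [p' Hm]. destruct (HPre bs p') as [q' Hm'].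
    pose proof (M_trans (HuW b) Hm Hm') as Hm2.
    assert (q' = q) by exact (M_fun (HuW b) Hx Hm2 Hpq). subst q'.
    apply F2; exists p'; auto.
  - exfalso. destruct (HPre bs p1') as [q1 Hm1]. destruct (HPre b p1) as [q2 Hm2].
    pose proof (Al_M_trans (HuW b) Hal Hm1) as Hal2.
    assert (q2 = q1) by exact (Al_fun (HuW b) Hx (M_Al' Hm2) Hal2). subst q2.
    rewrite (M_lab Hm2) -(M_lab Hm1) in L. exact (ltF L). }
assert (FG : forall b, ~ rel a b bs -> forall q, img b q -> wlt x q cs).
{ intros b Hb. destruct (Hatot b bs) as [L|[E|L]]; [contradiction|subst; apply F2|apply F4; auto]. }
destruct (Hne b0) as [qx _].
destruct (wf_min (P := fun _ => True) (proj1 (HuW bs)) (Hne bs)) as [p0s [_ Hp0s']].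
assert (Hp0s : forall p, ~ wlt (u bs) p p0s) by (intros p H; exact (Hp0s' p H I)).
set (g := blk u bs p0s).
assert (Hg : proper_pos g) by (exists (blk u b0 qx); apply blk_lt_diff; auto).
set (s := suffix g).
assert (Hs : WOk s) by (apply suffix_WOk; auto).
assert (HxW := blk_IEmb0 u Hb0).
assert (HLs : LEp x s).
{ apply (LE_first Hx HW Hs HxW); [|apply HWp; auto].
  intros [b p]. destruct (classic (b = b0)) as [->|Hb]; [left; exists p; reflexivity|right].
  intros p'; apply blk_lt_diff; auto. }
set (fs := sblk u Hp0s (Hairr bs) p0s).
assert (Hfs : forall y : pos s, ~ wlt s y fs).
{ intros [yv Hy] H; exact (Hy H). }
(* first positions aligned *)
assert (Hproper : forall gq k (Hk : ~ rel a k bs) pk, k <> bs -> Al x s gq (sblk u Hp0s Hk pk) ->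
          exists q', wlt x q' gq).
{ intros gq k Hk pk Hkb Hal. apply NNPP; intros N.
  assert (Hal0 : Al x s gq fs).
  { split.
    - intros p' Hp'; exfalso; apply N; eauto.
    - intros y Hy; exfalso; exact (Hfs y Hy). }
  pose proof (Al_fun Hx Hs Hal Hal0) as E.
  apply (f_equal (@proj1_sig _ _)) in E. apply (f_equal (@projT1 _ _)) in E. simpl in E. contradiction. }
assert (HGe : forall k, ~ rel a k bs -> k = bs \/ rel a bs k).
{ intros k Hk; destruct (Hatot k bs) as [L|[E|L]]; auto; contradiction. }
assert (Hleast : forall k, exists pk, forall p, ~ wlt (u k) p pk).
{ intros k; destruct (wf_min (P := fun _ => True) (proj1 (HuW k)) (Hne k)) as [pk [_ H]].
  exists pk; intros p Hp1; exact (H p Hp1 I). }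
destruct HLs as [HPs|[q [y [Hal L]]]].
2: {
destruct (s_decomp Hp0s y) as [k [Hk [p ->]]].
destruct (Hleast k) as [pk Hpk].
assert (Hgq : exists gq, Al x s gq (sblk u Hp0s Hk pk) /\ ~ wlt x q gq).
{ pose proof (HuW k) as [_ [Htk _]]. destruct (Htk pk p) as [L1|[E1|L1]].
  - assert (Hl : wlt s (sblk u Hp0s Hk pk) (sblk u Hp0s Hk p)) by (apply sblk_lt_same; auto).
    destruct (proj2 Hal _ Hl) as [gq Hgq Hm]. exists gq; split; [exact (M_Al' Hm)|].
    intros H; exact (Hxirr _ (Hxtr _ _ _ H Hgq)).
  - subst; exists q; split; auto.
  - exfalso; exact (Hpk p L1). }
destruct Hgq as [gq [Halg Hqg]].
destruct (HGe k Hk) as [->|Hk'].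
- pose proof (sblk_IEmb (u:=u) Hp0s Hk) as E.
  pose proof (proj2 (TI_Al_r (HuW bs) Hs Hx E p q) Hal) as Hal'.
  destruct (HPre bs p) as [r Hr]. pose proof (Al_M_trans Hx Hal' Hr) as Hxx.
  apply (Al_id Hx) in Hxx; subst r.
  change (lab s (sblk u Hp0s Hk p)) with (lab (u bs) p) in L.
  rewrite (M_lab Hr) in L; exact (ltF L).
- assert (Hkb : k <> bs) by (intro; subst; exact (Hairr _ Hk')).
  destruct (Hproper gq k Hk pk Hkb Halg) as [q' Hq'].
  assert (Hgg : ~ wlt x gq gq) by apply Hxirr.
  set (xg := suffix gq).
  assert (Hxg : WOk xg) by (apply suffix_WOk; auto).
  assert (HLg : LEp x xg) by (apply Tr; auto; apply (proj2 (Hp b0)); exists q'; exact Hq').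
  pose proof (suffix_CEmb Hgg) as Ce.
  pose proof (sblk_CEmb Hp0s Hk (Hairr k) Hpk) as Cf.
  set (qt := exist (fun z => ~ wlt x z gq) q Hqg : pos xg).
  pose proof (TC_Al Hxg Hx (HuW k) Hs Ce Cf Halg (p:=qt) (q:=p) Hal) as Hal2.
  destruct (HPre k p) as [r Hr].
  pose proof (Al_M_trans Hxg Hal2 Hr) as Hal3.
  apply (LE_STR_contra Hx Hxg HLg). exists qt, r. split; auto.
  change (lab xg qt) with (lab x q). rewrite <- (M_lab Hr). exact L.
}
set (Kt := fun k => exists q (y : pos s), M x s q y /\ projT1 (sval y) = k).
assert (HKt_ge : forall k, Kt k -> ~ rel a k bs).
{ intros k [q [y [_ E]]]. destruct (s_decomp Hp0s y) as [k' [Hk' [p ->]]]. simpl in E. subst; exact Hk'. }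
destruct (classic (exists kl, Kt kl /\ forall k, Kt k -> k = kl \/ rel a k kl)) as [[kl [Hkl Hmax]]|Nmax].
- destruct Hkl as [q1 [y1 [Hm1 E1]]].
  destruct (s_decomp Hp0s y1) as [k1 [Hkl' [p1 ->]]]. simpl in E1. subst k1.
  destruct (Hleast kl) as [pl Hpl].
  assert (Hgl : exists gq, M x s gq (sblk u Hp0s Hkl' pl)).
  { pose proof (HuW kl) as [_ [Htk _]]. destruct (Htk pl p1) as [L1|[E2|L1]].
    - assert (Hl : wlt s (sblk u Hp0s Hkl' pl) (sblk u Hp0s Hkl' p1)) by (apply sblk_lt_same; auto).
      destruct (M_down Hm1 Hl) as [gq _ Hm]; exists gq; exact Hm.
    - subst; exists q1; exact Hm1.
    - exfalso; exact (Hpl p1 L1). }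
  destruct Hgl as [gq Hmg].
  destruct (HGe kl Hkl') as [->|Hkl''].
  + assert (Hall : forall q, img bs q).
    { intros q. destruct (HPs q) as [y Hy]. destruct (s_decomp Hp0s y) as [k [Hk [p ->]]].
      assert (HK : Kt k) by (exists q, (sblk u Hp0s Hk p); split; auto).
      destruct (Hmax k HK) as [->|Lk]; [|contradiction].
      pose proof (sblk_IEmb (u:=u) Hp0s Hk) as E.
      pose proof (proj2 (TI_M_r (HuW bs) Hs Hx E p q) Hy) as Hy'.
      destruct (HPre bs p) as [r Hr]. pose proof (M_trans Hx Hy' Hr) as Hxx.
      assert (r = q) by exact (M_fun Hx Hx Hxx (M_refl Hx q)). subst r. exists p; exact Hr. }
    exact (Hxirr _ (F2 _ (Hall cs))).
  + assert (Hklb : kl <> bs) by (intro; subst; exact (Hairr _ Hkl'')).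
    destruct (Hproper gq kl Hkl' pl Hklb (M_Al' Hmg)) as [q' Hq'].
    assert (Hgg : ~ wlt x gq gq) by apply Hxirr.
    set (xg := suffix gq).
    assert (Hxg : WOk xg) by (apply suffix_WOk; auto).
    assert (HLg : LEp x xg) by (apply Tr; auto; apply (proj2 (Hp b0)); exists q'; exact Hq').
    pose proof (suffix_CEmb Hgg) as Ce.
    pose proof (sblk_CEmb Hp0s Hkl' (Hairr kl) Hpl) as Cf.
    assert (Himg : forall qt : pos xg, exists r, M xg x qt r /\ wlt x r cs).
    { intros [q Hq]. destruct (HPs q) as [y Hy]. destruct (s_decomp Hp0s y) as [k [Hk [p ->]]].
      assert (HK : Kt k) by (exists q, (sblk u Hp0s Hk p); split; auto).
      assert (k = kl).
      { destruct (Hmax k HK) as [E|Lk]; auto. exfalso.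
        assert (Hlt : wlt s (sblk u Hp0s Hk p) (sblk u Hp0s Hkl' pl)) by (apply (blk_lt_diff (u:=u)); exact Lk).
        destruct (Hxtot gq q) as [L1|[E1|L1]].
        - pose proof (M_mono Hx Hs Hy Hmg L1) as Hlt2. exact (WOk_irr Hs (proj2 (proj2 Hs) _ _ _ Hlt Hlt2)).
        - subst gq. rewrite (M_fun Hx Hs Hy Hmg) in Hlt. exact (WOk_irr Hs Hlt).
        - exact (Hq L1). }
      subst k. rewrite (sblk_pi Hp0s Hk Hkl' p) in Hy.
      pose proof (proj2 (TC_M Hxg Hx (HuW kl) Hs Ce Cf (M_Al' Hmg) (exist _ q Hq) p) Hy) as Hy2.
      destruct (HPre kl p) as [r Hr]. exists r. split; [exact (M_trans Hxg Hy2 Hr)|].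
      apply (FG kl Hkl'). exists p; exact Hr. }
    destruct HLg as [HPg|[q [t [Hal L]]]].
    * destruct (HPg cs) as [t Ht]. destruct (Himg t) as [r [Hr Hrc]].
      pose proof (M_trans Hx Ht Hr) as Hxx.
      assert (r = cs) by exact (M_fun Hx Hx Hxx (M_refl Hx cs)). subst r. exact (Hxirr _ Hrc).
    * destruct (Himg t) as [r [Hr _]]. pose proof (Al_M_trans Hx Hal Hr) as Hxx.
      apply (Al_id Hx) in Hxx; subst r. rewrite (M_lab Hr) in L. exact (ltF L).
- assert (Hnext : forall k, Kt k -> exists k', Kt k' /\ rel a k k').
  { intros k HK. apply NNPP; intros N. apply Nmax. exists k; split; auto.
    intros k' HK'. destruct (Hatot k' k) as [L|[E|L]]; auto. exfalso; apply N; eauto. }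
  set (K := subwo a Kt).
  assert (HK : is_wo K) by (apply subwo_is_wo; auto).
  pose proof (is_wo_WOo HK) as HKO.
  assert (Hkbs : forall k, ~ rel a k bs -> forall p : pos (u k), exists r, M (u k) (u bs) p r).
  { intros k Hk p. destruct (HPre k p) as [r' Hr']. 
    assert (Hc : wlt x r' cs) by (apply (FG k Hk); exists p; exact Hr').
    destruct (F1 r' Hc bs) as [r Hr]. exists r. exact (M_trans (HuW k) Hr' (M_sym (HuW bs) Hr)). }
  assert (Hkbs' : forall k (r : pos (u bs)), exists p : pos (u k), M (u k) (u bs) p r).
  { intros k r. destruct (HPre bs r) as [r' Hr'].
    assert (Hc : wlt x r' cs) by (apply F2; exists r; exact Hr').
    destruct (F1 r' Hc k) as [p Hpp]. exists p. exact (M_trans (HuW k) Hpp (M_sym (HuW bs) Hr')). }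
  assert (Hiso : word_iso x (wpow (u bs) K)).
  { apply (@block_iso d A x (u bs) K
      (fun q (kk : car K) r => exists y : pos s, M x s q y /\ projT1 (sval y) = sval kk /\
          M (u (projT1 (sval y))) (u bs) (projT2 (sval y)) r)); auto.
    - intros q. destruct (HPs q) as [y Hy]. destruct (s_decomp Hp0s y) as [k [Hk [p ->]]].
      assert (HKt : Kt k) by (exists q, (sblk u Hp0s Hk p); split; auto).
      destruct (Hkbs k Hk p) as [r Hr].
      exists (exist _ k HKt : car K), r, (sblk u Hp0s Hk p). split; auto.
    - intros [k HKt] r. pose proof (HKt_ge k HKt) as Hk. destruct (Hkbs' k r) as [p Hpr].
      destruct (Hnext k HKt) as [k' [[q' [y' [Hm' E']]] Hkk']].
      destruct (s_decomp Hp0s y') as [k'' [Hk'' [p' ->]]]. simpl in E'; subst k''.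
      assert (Hlt : wlt s (sblk u Hp0s Hk p) (sblk u Hp0s Hk'' p')) by (apply (blk_lt_diff (u:=u)); exact Hkk').
      destruct (M_down Hm' Hlt) as [q _ Hm]. exists q, (sblk u Hp0s Hk p). split; auto.
    - intros q kk r q' kk' r' [y [Hy [Ey Hry]]] [y' [Hy' [Ey' Hry']]].
      destruct (s_decomp Hp0s y) as [k [Hk [p ->]]]; destruct (s_decomp Hp0s y') as [k' [Hk' [p' ->]]].
      simpl in Ey, Ey', Hry, Hry'.
      rewrite (M_mono_iff Hx Hs Hy' Hy).
      destruct kk as [kv Hkv], kk' as [kv' Hkv']; simpl in Ey, Ey'. subst kv kv'.
      change (wlt s (sblk u Hp0s Hk p) (sblk u Hp0s Hk' p')) with (wlt (wprod a u) (blk u k p) (blk u k' p')).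
      change (rel K (exist _ k Hkv) (exist _ k' Hkv')) with (rel a k k').
      split.
      + intros L. destruct (W_lt_inv L) as [L'|E]; [left; exact L'|right].
        subst k'. split; [f_equal; apply proof_irrelevance|].
        apply (@blk_lt_same d A a u k p p' (Hairr k)) in L.
        exact (M_mono (HuW k) (HuW bs) Hry' Hry L).
      + intros [L|[E L]]; [apply blk_lt_diff; exact L|].
        apply (f_equal (@proj1_sig _ _)) in E; simpl in E. subst k'.
        apply (@blk_lt_same d A a u k p p' (Hairr k)).
        exact (proj2 (M_mono_iff (HuW k) (HuW bs) Hry' Hry) L).
    - intros q kk r [y [Hy [_ Hry]]]. rewrite (M_lab Hy).
      destruct (s_decomp Hp0s y) as [k [Hk [p ->]]]. exact (M_lab Hry). }
  destruct (proj1 (Hp b0) (u bs) K (Hu bs) HK Hiso) as [Hone _].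
  destruct (HPs qx) as [y0 Hy0]. destruct (s_decomp Hp0s y0) as [k0 [Hk0 [p0 ->]]].
  assert (HK0 : Kt k0) by (exists qx, (sblk u Hp0s Hk0 p0); split; auto).
  destruct (Hnext k0 HK0) as [k1 [HK1 Hk01]].
  apply (@wo_iso_one_contra K (exist _ k0 HK0) (exist _ k1 HK1)); auto.
  intros E. apply (f_equal (@proj1_sig _ _)) in E; simpl in E. subst k1. exact (Hairr _ Hk01).
Qed.


Theorem mainTheorem17 (d : Order.disp_t) (A : finOrderType d)
  (a : wo) (u : car a -> @word d A) :
  is_wo a ->
  (forall b, valid (u b)) ->
  (forall b, prime_word (u b)) ->
  nonincreasing u ->
  (exists b1 b2 : car a, b1 <> b2) ->
  ~ prime_word (wprod a u).
Proof.
intros Ha Hu Hp Hni Hb12 Hw.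
pose proof (is_wo_WOo Ha) as HaO. pose proof HaO as [Hawf [Hatot Hatr]].
assert (Hairr : forall b, ~ rel a b b) by (apply wf_irrefl; auto).
assert (HuW : forall b, WOk (u b)) by (intros; apply valid_WOk; auto).
assert (HW : WOk (wprod a u)) by (apply wprod_WOk; auto).
assert (HWp : forall g : pos (wprod a u), proper_pos g -> LEp (wprod a u) (suffix g)).
{ intros g Hg. apply Tr; auto. apply suffix_WOk; auto. apply (proj2 Hw); auto. }
destruct Hb12 as [b1 [b2 Hb12]].
destruct (wf_min (P := fun _ => True) Hawf (ex_intro _ b1 I)) as [b0 [_ Hb0]].
assert (Hb0' : forall b, ~ rel a b b0) by (intros b H; exact (Hb0 b H I)).
assert (Hne : forall b, exists p : pos (u b), True) by (intros; apply prime_nonempty; auto).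
assert (Hlt0 : forall b, b <> b0 -> rel a b0 b).
{ intros b Hb; destruct (Hatot b b0) as [L|[E|L]]; [destruct (Hb0' _ L)|contradiction|exact L]. }
assert (HLE : forall b, b <> b0 -> LEp (u b) (u b0)) by (intros b Hb; apply Tr; auto; apply Hni; auto).
destruct (classic (exists b, b <> b0 /\ STR (u b) (u b0))) as [[b [Hb HS]]|NS].
- destruct HS as [p [p' [Hal L]]].
  destruct (wf_min (P := fun _ => True) (proj1 (HuW b)) (Hne b)) as [p0 [_ Hp0']].
  assert (Hp0 : forall p, ~ wlt (u b) p p0) by (intros q H; exact (Hp0' q H I)).
  destruct (Hne b0) as [q0 _].
  set (g := blk u b p0).
  assert (Hg : proper_pos g) by (exists (blk u b0 q0); apply blk_lt_diff; auto).
  assert (Hs : WOk (suffix g)) by (apply suffix_WOk; auto).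
  pose proof (sblk_IEmb (u:=u) Hp0 (Hairr b)) as Emb.
  pose proof (blk_IEmb0 u Hb0') as E0.
  apply (LE_STR_contra HW Hs (HWp g Hg)).
  exists (sblk u Hp0 (Hairr b) p), (blk u b0 p'). split; [|exact L].
  apply (TI_Al (HuW b) Emb). apply (TI_Al_r (HuW b0) HW (HuW b) E0). exact Hal.
- assert (HPre : forall b, Pre (u b) (u b0)).
  { intros b. destruct (classic (b = b0)) as [->|Hb].
    - intros p; exists p; apply M_refl; auto.
    - destruct (HLE b Hb) as [H|H]; auto. exfalso; apply NS; eauto. }
  destruct (classic (forall b q, exists p, M (u b) (u b0) p q)) as [Hfull|Hnf].
  + exact (C1 Ha Hu Hb12 HPre Hfull (proj1 Hw)).
  + exact (C3 Ha Hu Hp Hni Hb0' Hne HPre Hnf HWp).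
Qed.
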